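(* Consider any finite game in extensive form with perfect recall. Let $\bar\beta^1=(\bar\beta^1_i)_{i\in N}$ be a profile of full-support belief systems and let $\beta^1=(\beta^1_i)_{i\in N}$ be a profile of full-support beliefs in the associated normal form that is consistent with $\bar\beta^1$. Then for every player $i\in N$, $\bar L_i^1(\bar\beta^1)=L_i^1(\beta^1)$.
   Context: Setting: a finite extensive-form game with finite player set $N$, possibly moves of nature $c$ (treated as a player with singleton information sets, indifferent among outcomes), possibly simultaneous moves, imperfect information, finite horizon and perfect recall. $Z$ is the set of terminal histories; $u_i:Z\to\mathbb{R}$ is player $i$'s (Bernoulli) utility; $\mathcal{I}_i$ is the set of information sets of player $i$ and $A_i(I_i)$ the actions at $I_i$. A strategy $s_i$ assigns to each $I_i\in\mathcal{I}_i$ an action in $A_i(I_i)$; $S_i$ is the set of strategies, $S_{-i}$ is the product of the strategy sets of all other players together with nature (if nature moves). $z(s)$ is the terminal history reached by profile $s$. A profile $s_{-i}$ reaches $I_i$ if there is $s_i$ such that $(s_i,s_{-i})$ reaches $I_i$; $s_i$ reaches $I_i$ if there is $s_{-i}$ with $(s_i,s_{-i})$ reaching $I_i$. Let $S_{-i}(I_i)$ be the set of $s_{-i}$ reaching $I_i$. A belief system of $i$ is $\bar\beta_i=(\bar\beta_i(I_i))_{I_i\in\mathcal I_i}$ with $\bar\beta_i(I_i)\in\Delta(S_{-i})$, $\bar\beta_i(I_i)(S_{-i}(I_i))=1$, and such that if $I_i$ precedes $I_i'$ then $\bar\beta_i(I_i')$ is obtained from $\bar\beta_i(I_i)$ by conditioning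 on $S_{-i}(I_i')$ whenever this event has positive probability. It is full-support if each $\bar\beta_i(I_i)$ assigns positive probability to every element of $S_{-i}(I_i)$. A strategy $s_i'$ is an $I_i$-replacement of $s_i$ if it agrees with $s_i$ on all information sets strictly preceding $I_i$. Strategy $s_i$ is rational at $I_i$ with belief system $\bar\beta_i$ if either $s_i$ does not reach $I_i$, or no $I_i$-replacement of $s_i$ yields strictly higher expected utility $\sum_{s_{-i}}\bar\beta_i(I_i)(s_{-i})u_i(z(\cdot,s_{-i}))$ than $s_i$. Strong level-1: $\bar L_i^1(\bar\beta^1)=\{s_i\in S_i: s_i\text{ is rational at every } I_i\in\mathcal I_i \text{ with } \bar\beta^1_i\}$. Associated normal form: action sets $S_i$, utilities $s\mapsto u_i(z(s))$ (expected over nature if relevant via beliefs on $S_{-i}$). A belief $\beta^1_i\in\Delta(S_{-i})$ is full-support if it gives positive probability to every element of $S_{-i}$; it is consistent with $\bar\beta^1_i$ if $\bar\beta^1_i(I_i)=\beta^1_i(\cdot\mid S_{-i}(I_i))$ for every $I_i\in\mathcal I_i$. Normal-form level-1: $L_i^1(\beta^1)=\{s_i\in S_i: s_i \text{ maximizes } \sum_{s_{-i}}\beta^1_i(s_{-i})u_i(z(s_i,s_{-i}))\}$. *)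

(* Defs.v *)
From HB Require Import structures.
From mathcomp Require Import all_boot all_order all_algebra.
Import Order.TTheory GRing.Theory Num.Theory.
Local Open Scope ring_scope.

(* Raw data of a finite extensive-form game.
   - [mover]: players together with (possibly) nature; [is_player] singles out N.
   - [infoset j], [action j I]: information sets of mover j and actions A_j(I).
   - [node]: the finite set of histories (nodes of the game tree), [root] = empty history.
   - [iset j h = Some I] iff mover j is active at h and h belongs to I.
     A node where no mover is active is terminal.
   - [succ h s]: the child of the non-terminal node h reached when the active
     movers play according to the (full) strategy profile s; well-formedness
     requires it to depend only on the actions s_j(I_j(h)) of active movers,
     and different action profiles to give different children. *)
Record egame := EGame {
  mover : finType;
  is_player : pred mover;
  infoset : mover -> finType;
  action : forall j : mover, infoset j -> finType;
  node : finType;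
  root : node;
  iset : forall j : mover, node -> option (infoset j);
  succ : node -> (forall j : mover, {dffun forall I : infoset j, action j I}) -> node
}.

Set Implicit Arguments. Unset Strict Implicit. Unset Printing Implicit Defensive.

Section Game.
Variable G : egame.

Definition strat (j : mover G) := {dffun forall I : infoset G j, action G j I}.
Definition profile := forall j : mover G, strat j.

Definition terminal (h : node G) : bool := [forall j, iset G j h == None].
Definition step (s : profile) (h : node G) : node G :=
  if terminal h then h else succ G h s.
Definition play (s : profile) (n : nat) : node G := iter n (step s) (root G).
(* z(s): the terminal history reached by s (the horizon is < #|node G|) *)
Definition outcome (s : profile) : node G := play s #|node G|.

Definition agree_at (h : node G) (s s' : profile) : Prop :=
  forall j I, iset G j h = Some I -> s j I = s' j I.

Definition experience (j : mover G) (s : profile) (n : nat)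
  : seq {I : infoset G j & action G j I} :=
  pmap (fun k => if iset G j (play s k) is Some J
                 then Some (Tagged (action G j) (s j J)) else None) (iota 0 n).

Record wf_game : Prop := {
  wf_root : forall h s, ~~ terminal h -> succ G h s <> root G;
  wf_parent : forall h h' s s', ~~ terminal h -> ~~ terminal h' ->
      succ G h s = succ G h' s' -> h = h';
  wf_local : forall h s s', agree_at h s s' -> succ G h s = succ G h s';
  wf_distinct : forall h s s', succ G h s = succ G h s' -> agree_at h s s';
  wf_reach : forall h, exists s n, play s n = h;
  wf_infoset_ne : forall j I, exists h, iset G j h = Some I;
  wf_action_ne : forall j I, (0 < #|{: action G j I}|)%N;
  wf_one_nature : forall c c', ~~ is_player G c -> ~~ is_player G c' -> c = c';
  wf_nature_singleton : forall c h h' I, ~~ is_player G c ->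
      iset G c h = Some I -> iset G c h' = Some I -> h = h';
  wf_perfect_recall : forall j s s' n n' I, is_player G j ->
      iset G j (play s n) = Some I -> iset G j (play s' n') = Some I ->
      experience j s n = experience j s' n'
}.

(* S_{-i}: strategies of all other movers (other players and nature) *)
Definition oprof (i : mover G) :=
  {dffun forall k : {j : mover G | j != i}, strat (val k)}.

Definition join (i : mover G) (si : strat i) (sm : oprof i) : profile :=
  fun j => match j =P i with
           | ReflectT e => eq_rect_r strat si e
           | ReflectF ne => sm (exist (fun j => j != i) j (introN eqP ne))
           end.

(* a profile reaches I_j (plays have length < #|node G|) *)
Definition reaches (j : mover G) (s : profile) (I : infoset G j) : bool :=
  [exists n : 'I_#|node G|, iset G j (play s n) == Some I].
Definition reachesO (i : mover G) (I : infoset G i) : pred (oprof i) :=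
  fun sm => [exists si, reaches (join si sm) I].
Definition reachesS (i : mover G) (si : strat i) (I : infoset G i) : bool :=
  [exists sm, reaches (join si sm) I].

Definition precedes (j : mover G) (I I' : infoset G j) : Prop :=
  exists s m n, (m < n)%N /\ iset G j (play s m) = Some I /\
                iset G j (play s n) = Some I'.

Variable R : realFieldType.

Definition prob (i : mover G) (b : {ffun oprof i -> R}) (E : pred (oprof i)) : R :=
  \sum_(sm | E sm) b sm.
Definition is_dist (i : mover G) (b : {ffun oprof i -> R}) : Prop :=
  (forall sm, 0 <= b sm) /\ \sum_sm b sm = 1.
Definition cond (i : mover G) (b : {ffun oprof i -> R}) (E : pred (oprof i))
  : {ffun oprof i -> R} :=
  [ffun sm => if E sm then b sm / prob b E else 0].

Definition belief_system (i : mover G) (bb : infoset G i -> {ffun oprof i -> R}) : Prop :=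
  (forall I, is_dist (bb I)) /\
  (forall I, prob (bb I) (reachesO I) = 1) /\
  (forall I I', precedes I I' -> 0 < prob (bb I) (reachesO I') ->
       bb I' = cond (bb I) (reachesO I')).
Definition full_support_system (i : mover G) (bb : infoset G i -> {ffun oprof i -> R}) : Prop :=
  forall I sm, reachesO I sm -> 0 < bb I sm.

Definition full_support (i : mover G) (b : {ffun oprof i -> R}) : Prop :=
  forall sm, 0 < b sm.
Definition consistent (i : mover G) (b : {ffun oprof i -> R})
    (bb : infoset G i -> {ffun oprof i -> R}) : Prop :=
  forall I, bb I = cond b (reachesO I).

Definition EU (i : mover G) (ui : node G -> R) (b : {ffun oprof i -> R}) (si : strat i) : R :=
  \sum_sm b sm * ui (outcome (join si sm)).

Definition replacement (i : mover G) (I : infoset G i) (si si' : strat i) : Prop :=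
  forall I', precedes I' I -> si' I' = si I'.

Definition rational_at (i : mover G) (ui : node G -> R)
    (bb : infoset G i -> {ffun oprof i -> R}) (si : strat i) (I : infoset G i) : Prop :=
  ~~ reachesS si I \/
  forall si', replacement I si si' -> ~ (EU ui (bb I) si < EU ui (bb I) si').

Definition strong_L1 (i : mover G) (ui : node G -> R)
    (bb : infoset G i -> {ffun oprof i -> R}) (si : strat i) : Prop :=
  forall I, rational_at ui bb si I.
Definition nf_L1 (i : mover G) (ui : node G -> R) (b : {ffun oprof i -> R})
    (si : strat i) : Prop :=
  forall si', EU ui b si' <= EU ui b si.

End Game.

(* Main.v *)
Require Import Defs.
From HB Require Import structures.
From mathcomp Require Import all_boot all_order all_algebra.
Import Order.TTheory GRing.Theory Num.Theory.
Local Open Scope ring_scope.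
Set Implicit Arguments. Unset Strict Implicit. Unset Printing Implicit Defensive.

Lemma reflectT_case (P : Prop) b (r : reflect P b) (A : Type) (f : P -> A) (g : ~ P -> A) (p : P) :
  (forall e e', f e = f e') ->
  match r with ReflectT e => f e | ReflectF ne => g ne end = f p.
Proof. by case: r => [e|ne] H //; case: ne. Qed.

Lemma reflectF_case (P : Prop) b (r : reflect P b) (A : Type) (f : P -> A) (g : ~ P -> A) (p : ~ P) :
  (forall e e', g e = g e') ->
  match r with ReflectT e => f e | ReflectF ne => g ne end = g p.
Proof. by case: r => [e|ne] H //; case: p. Qed.

Lemma join_i (G : egame) (i : mover G) (si : strat i) (sm : oprof i) :
  join si sm i = si.
Proof.
rewrite /join. rewrite (@reflectT_case _ _ _ _ _ _ (erefl i)) //.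
by move=> e e'; rewrite (eq_irrelevance e e').
Qed.

Lemma join_o (G : egame) (i : mover G) (si si' : strat i) (sm : oprof i) j :
  j != i -> join si sm j = join si' sm j.
Proof. move=> ne; rewrite /join.
rewrite !(@reflectF_case _ _ _ _ _ _ (elimN eqP ne)) //.
all: move=> e e'; by rewrite (bool_irrelevance (introN eqP e) (introN eqP e')).
Qed.

Lemma play_agree (G : egame) (wf : wf_game G) (s s' : profile G) k :
  (forall k', (k' < k)%N -> agree_at (play s k') s s') -> play s k = play s' k.
Proof.
elim: k => [//|k IH] H.
have e : play s k = play s' k by apply: IH => k' lt; apply: H; apply: ltn_trans lt _.
rewrite /play !iterS -/(play s k) -/(play s' k) -e /step.
case: ifP => // _; apply: (wf_local wf); exact: H.
Qed.

Lemma agree_join (G : egame) (i : mover G) (si si' : strat i) (sm : oprof i) h :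
  (forall J, iset G i h = Some J -> si J = si' J) ->
  agree_at h (join si sm) (join si' sm).
Proof.
move=> H j; have [->|ne] := eqVneq j i.
  by move=> I hI; rewrite !join_i; apply: H.
by move=> I _; rewrite (@join_o _ _ si si' sm j ne).
Qed.

Lemma play_join (G : egame) (wf : wf_game G) (i : mover G) (si si' : strat i) (sm : oprof i) k :
  (forall k' J, (k' < k)%N -> iset G i (play (join si sm) k') = Some J -> si J = si' J) ->
  play (join si sm) k = play (join si' sm) k.
Proof.
move=> H; apply: play_agree => // k' lt; apply: agree_join => J; exact: H.
Qed.

Lemma size_exp (G : egame) (j : mover G) s n :
  size (experience j s n) = count (fun k => iset G j (play s k) != None) (iota 0 n).
Proof.
rewrite /experience size_pmap; apply: eq_count => k /=.
by case: (iset G j (play s k)).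
Qed.

Lemma exp_size0 (G : egame) (j : mover G) s n :
  (forall k, (k < n)%N -> iset G j (play s k) = None) -> size (experience j s n) = 0%N.
Proof.
move=> H; rewrite size_exp; transitivity (count pred0 (iota 0 n)); last exact: count_pred0.
apply: eq_in_count => k.
rewrite mem_iota add0n /= => /H ->; by [].
Qed.

Lemma exp_size_pos (G : egame) (j : mover G) s n m J :
  (m < n)%N -> iset G j (play s m) = Some J -> (0 < size (experience j s n))%N.
Proof.
move=> lt e; rewrite size_exp -has_count; apply/hasP; exists m.
  by rewrite mem_iota add0n.
by rewrite e.
Qed.

Lemma exp_mem (G : egame) (i : mover G) si sm k n J :
  (k < n)%N -> iset G i (play (join si sm) k) = Some J ->
  Tagged (action G i) (si J) \in experience i (join si sm) n.
Proof.
move=> lt e; rewrite /experience mem_pmap.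
apply/mapP; exists k; first by rewrite mem_iota.
by rewrite e join_i.
Qed.

Lemma exp_mem_inv (G : egame) (i : mover G) si sm n J (a : action G i J) :
  Tagged (action G i) a \in experience i (join si sm) n ->
  exists2 k, (k < n)%N & iset G i (play (join si sm) k) = Some J /\ si J = a.
Proof.
rewrite /experience mem_pmap => /mapP[k]; rewrite mem_iota add0n /= => lt.
case e: (iset G i (play (join si sm) k)) => [J'|//] /Some_inj.
rewrite join_i => eT.
have eJ : J' = J by move: (congr1 tag eT).
subst J'; exists k => //; split => //.
exact: eq_from_Tagged.
Qed.

Lemma reach_prod (G : egame) (wf : wf_game G) (i : mover G) (pi : is_player G i)
  (si si0 : strat i) (sm sm0 : oprof i) n0 n1 I :
  iset G i (play (join si sm0) n0) = Some I ->
  iset G i (play (join si0 sm) n1) = Some I ->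
  play (join si sm) n1 = play (join si0 sm) n1.
Proof.
move=> e0 e1.
have ex := wf_perfect_recall wf pi e0 e1.
symmetry; apply: play_join => // k J lt eJ.
have := exp_mem lt eJ; rewrite -ex => /exp_mem_inv[k' _ [_ ->]] //.
Qed.

Lemma exp_mem_gen (G : egame) (i : mover G) (s : profile G) k n J :
  (k < n)%N -> iset G i (play s k) = Some J ->
  Tagged (action G i) (s i J) \in experience i s n.
Proof.
move=> lt e; rewrite /experience mem_pmap.
apply/mapP; exists k; first by rewrite mem_iota.
by rewrite e.
Qed.

Lemma EU_split (R : realFieldType) (G : egame) (i : mover G) (u : node G -> R)
  (b : {ffun oprof i -> R}) (P : pred (oprof i)) (s : strat i) :
  EU u b s = \sum_(sm | P sm) b sm * u (outcome (join s sm))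
           + \sum_(sm | ~~ P sm) b sm * u (outcome (join s sm)).
Proof. by rewrite /EU (bigID P). Qed.

Lemma EU_cond (R : realFieldType) (G : egame) (i : mover G) (u : node G -> R)
  (b : {ffun oprof i -> R}) (P : pred (oprof i)) (s : strat i) :
  EU u (cond b P) s = (prob b P)^-1 * \sum_(sm | P sm) b sm * u (outcome (join s sm)).
Proof.
rewrite (EU_split _ _ P) [X in _ + X]big1 ?addr0; last by move=> sm /negbTE nP; rewrite ffunE nP mul0r.
rewrite mulr_sumr; apply: eq_bigr => sm Psm; rewrite ffunE Psm.
by rewrite mulrA [_^-1 * _]mulrC.
Qed.

From Stdlib Require Import ClassicalEpsilon.

Lemma nf_to_strong (R : realFieldType) (G : egame) (wf : wf_game G) (i : mover G)
  (pi : is_player G i) (u : node G -> R) (b : {ffun oprof i -> R})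
  (bb : infoset G i -> {ffun oprof i -> R}) (si : strat i) (I : infoset G i) :
  (forall sm, 0 <= b sm) -> bb I = cond b (reachesO I) ->
  nf_L1 u b si -> rational_at u bb si I.
Proof.
move=> b0 ebb nf; case: (boolP (reachesS si I)) => [rS|nrS]; last by left.
right => si' rep lt.
case/existsP: rS => sm0 /existsP[n0 /eqP e0].
pose si2 : strat i := finfun (fun J : infoset G i =>
  if excluded_middle_informative (J = I \/ precedes I J) then si' J else si J).
set N := #|node G|.
have hA : forall sm, reachesO I sm ->
    outcome (join si2 sm) = outcome (join si' sm).
  move=> sm /existsP[si0 /existsP[n1 /eqP e1]].
  have e2 := reach_prod wf pi e0 e1.
  have e3 : play (join si' sm) n1 = play (join si sm) n1.
    symmetry; apply: play_join => // k J lt1 eJ.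
    symmetry; apply: rep; exists (join si sm), k, n1; split => //; split => //.
    by rewrite e2.
  have eI : iset G i (play (join si' sm) n1) = Some I by rewrite e3 e2.
  symmetry; apply: play_join => // k J _ eJ.
  rewrite /si2 ffunE; case: excluded_middle_informative => // H.
  case: (ltngtP k n1) => [lt1|gt1|eq1].
  - apply: rep; exists (join si' sm), k, n1; split => //; split => //.
  - by case: H; right; exists (join si' sm), n1, k.
  - by case: H; left; move: eJ; rewrite eq1 eI => -[].
have hB : forall sm, ~~ reachesO I sm ->
    outcome (join si2 sm) = outcome (join si sm).
  move=> sm nR; symmetry; apply: play_join => // k J ltk eJ.
  rewrite /si2 ffunE; case: excluded_middle_informative => // H.
  exfalso; move/negP: nR; apply.
  case: H => [eJI|[s [m [n [ltmn [eI eJ']]]]]].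
    subst J; apply/existsP; exists si; apply/existsP; exists (Ordinal ltk).
    by rewrite eJ.
  have ex := wf_perfect_recall wf pi eJ' eJ.
  have := exp_mem_gen ltmn eI; rewrite ex => /exp_mem_inv[k' ltk' [eI' _]].
  apply/existsP; exists si; apply/existsP; exists (Ordinal (ltn_trans ltk' ltk)).
  by rewrite eI'.
move: lt; rewrite !ebb !EU_cond.
set A := \sum_(sm | _) _ * u (outcome (join si sm)).
set A' := \sum_(sm | _) _ * u (outcome (join si' sm)).
have : A' <= A.
  have := nf si2; rewrite (EU_split _ _ (reachesO I)) (EU_split _ _ (reachesO I) si).
  have -> : \sum_(sm | reachesO I sm) b sm * u (outcome (join si2 sm)) = A'.
    by apply: eq_bigr => sm /hA ->.
  have -> : \sum_(sm | ~~ reachesO I sm) b sm * u (outcome (join si2 sm))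
          = \sum_(sm | ~~ reachesO I sm) b sm * u (outcome (join si sm)).
    by apply: eq_bigr => sm /hB ->.
  by rewrite lerD2r.
move=> le; apply/negP; rewrite -leNgt; apply: ler_wpM2l => //.
by rewrite invr_ge0 /prob sumr_ge0.
Qed.

Definition fk (G : egame) (i : mover G) (s : profile G) : nat :=
  find (fun k => iset G i (play s k) != None) (iota 0 #|node G|).

Lemma fk_le (G : egame) (i : mover G) s : (fk i s <= #|node G|)%N.
Proof. by have := find_size (fun k => iset G i (play s k) != None) (iota 0 #|node G|); rewrite size_iota. Qed.

Lemma fk_spec (G : egame) (i : mover G) s :
  (fk i s < #|node G|)%N -> iset G i (play s (fk i s)) != None.
Proof.
move=> lt.
have := @nth_find _ 0%N (fun k => iset G i (play s k) != None) (iota 0 #|node G|).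
by rewrite has_find size_iota => /(_ lt); rewrite nth_iota // add0n.
Qed.

Lemma fk_before (G : egame) (i : mover G) s k :
  (k < fk i s)%N -> iset G i (play s k) = None.
Proof.
move=> lt; have := before_find 0%N lt.
have ltN : (k < #|node G|)%N by apply: leq_trans lt (fk_le _ _).
by rewrite nth_iota // add0n => /negPn/eqP.
Qed.

Lemma fk_min (G : egame) (i : mover G) s k :
  iset G i (play s k) != None -> (fk i s <= k)%N.
Proof. by move=> H; rewrite leqNgt; apply/negP => /fk_before; move/eqP: H. Qed.

Definition first (G : egame) (i : mover G) (si : strat i) (sm : oprof i) : option (infoset G i) :=
  if (fk i (join si sm) < #|node G|)%N then iset G i (play (join si sm) (fk i (join si sm))) else None.

Lemma strong_to_nf (R : realFieldType) (G : egame) (wf : wf_game G) (i : mover G)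
  (pi : is_player G i) (u : node G -> R) (b : {ffun oprof i -> R})
  (bb : infoset G i -> {ffun oprof i -> R}) (si : strat i) :
  (forall sm, 0 < b sm) -> (forall I, bb I = cond b (reachesO I)) ->
  strong_L1 u bb si -> nf_L1 u b si.
Proof.
move=> b0 ebb st si'.
rewrite /EU (partition_big (first si) predT) //= [X in _ <= X](partition_big (first si) predT) //=.
apply: ler_sum => -[I|] _; last first.
  rewrite le_eqVlt; apply/orP; left; apply/eqP/eq_bigr => sm /eqP fN; congr (_ * u _).
  have kN : fk i (join si sm) = #|node G|.
    apply/eqP; rewrite eqn_leq fk_le leqNgt; apply/negP => lt.
    by move: fN (fk_spec lt); rewrite /first lt => ->.
  symmetry; apply: play_join => // k J lt; rewrite fk_before // kN //.
case: (boolP [exists sm, first si sm == Some I]) => [/existsP[sm0 /eqP f0]|none]; last first.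
  rewrite !big_pred0 // => sm; apply/negbTE; move: none; rewrite negb_exists => /forallP; exact.
move: f0; rewrite /first; case: ifP => // lt0 eI0.
set k0 := fk i (join si sm0) in lt0 eI0.
have minI : forall J, ~ precedes J I.
  move=> J [s [m [n [ltmn [eJ eI]]]]].
  have ex := wf_perfect_recall wf pi eI eI0.
  have := exp_size_pos ltmn eJ; rewrite ex exp_size0 //.
  by move=> k lk; apply: fk_before.
have charac : forall sm, reachesO I sm = (first si sm == Some I).
  move=> sm; apply/idP/idP.
    case/existsP => si1 /existsP[n1 /eqP e1].
    set k1 := fk i (join si1 sm).
    have k1n : (k1 <= n1)%N by apply: fk_min; rewrite e1.
    have agr : forall k, (k <= k1)%N -> play (join si sm) k = play (join si1 sm) k.
      move=> k kk; symmetry; apply: play_join => // k' J lt'; rewrite fk_before //.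
      exact: leq_trans lt' kk.
    have k1N : (k1 < #|node G|)%N by apply: leq_ltn_trans k1n (ltn_ord n1).
    have nn1 : iset G i (play (join si sm) k1) != None by rewrite agr // fk_spec.
    have kk1 := fk_min nn1.
    have kN : (fk i (join si sm) < #|node G|)%N by apply: leq_ltn_trans kk1 k1N.
    rewrite /first kN.
    have := fk_spec kN; rewrite agr //.
    case eJ: (iset G i (play (join si1 sm) (fk i (join si sm)))) => [J|//] _.
    have [lt1|eq1] : (fk i (join si sm) < n1)%N \/ fk i (join si sm) = n1.
      by move: (leq_trans kk1 k1n); rewrite leq_eqVlt => /orP[/eqP|]; [right|left].
      by exfalso; apply: (minI J); exists (join si1 sm), (fk i (join si sm)), (nat_of_ord n1).
    by move: eJ; rewrite eq1 e1 => ->.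
  rewrite /first; case: ifP => // lt /eqP e.
  by apply/existsP; exists si; apply/existsP; exists (Ordinal lt); rewrite e.
have rS : reachesS si I.
  by apply/existsP; exists sm0; apply/existsP; exists (Ordinal lt0); rewrite eI0.
case: (st I) => [|H]; first by rewrite rS.
have := H si' (fun I' p => False_ind _ (minI I' p)).
rewrite !ebb !EU_cond.
have pp : 0 < prob b (reachesO I).
  rewrite /prob (bigD1 sm0) /=; last by rewrite charac /first lt0 eI0.
  apply: lt_le_trans (b0 sm0) _; rewrite lerDl sumr_ge0 // => sm _; exact: ltW.
move/negP; rewrite -leNgt ler_pM2l ?invr_gt0 //.
by rewrite !(eq_bigl _ _ charac).
Qed.

Theorem proposition3 (R : realFieldType) (G : egame)
  (u : forall j : mover G, node G -> R)
  (bb : forall i : mover G, infoset G i -> {ffun oprof i -> R})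
  (b : forall i : mover G, {ffun oprof i -> R}) :
  wf_game G ->
  (forall i, is_player G i -> belief_system (bb i) /\ full_support_system (bb i)) ->
  (forall i, is_player G i ->
     [/\ is_dist (b i), full_support (b i) & consistent (b i) (bb i)]) ->
  forall i : mover G, is_player G i ->
    forall si : strat i, strong_L1 (u i) (bb i) si <-> nf_L1 (u i) (b i) si.
Proof.
move=> wf _ Hb i pi si; have [[b0 _] bfs cons] := Hb i pi.
split.
  by apply: strong_to_nf => //.
move=> nf I; apply: nf_to_strong => //.
Qed.
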